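(* Assume $b_0\neq 0$. Then $$X(b_0)=\bigcup_{n\in\mathbb{Z}} (t^n,t^{-n})\cdot M(b_0)(\mathcal{O}_{\overline{E}}).$$ In particular, if $b_0\notin \mathcal{O}_{\overline{E}}$ then $X(b_0)=\emptyset$.
   Context: Let $\overline{E}$ be a nonarchimedean local field with ring of integers $\mathcal{O}_{\overline{E}}$ and residue field $k$ of characteristic $\neq 2$, and let $t\in\mathcal{O}_{\overline{E}}$ be a uniformizer. Consider the split quadratic extension $\overline{K}=\overline{E}\oplus\overline{E}$. For $b_0\in\overline{E}$, let $M(b_0)$ denote the set of pairs of column vectors $x=(x_1,x_2)^T$, $y=(y_1,y_2)^T$ in $\overline{E}^2$ with $\det(x,y)=x_1y_2-x_2y_1=b_0$ (i.e. $2\times 2$ matrices with columns $x,y$ and determinant $b_0$), and $M(b_0)(\mathcal{O}_{\overline{E}})$ the subset of such pairs with all entries in $\mathcal{O}_{\overline{E}}$. Let $X(b_0)\subset M(b_0)$ be the subset of $(x,y)$ such that $x_1x_2\in\mathcal{O}_{\overline{E}}$, $y_1y_2\in\mathcal{O}_{\overline{E}}$ and $x_1y_2+x_2y_1\in\mathcal{O}_{\overline{E}}$. The element $(t^n,t^{-n})\in \overline{K}^*$ (of norm $1$) acts on $M(b_0)$ by $(x_1,x_2,y_1,y_2)\mapsto (t^nx_1,t^{-n}x_2,t^ny_1,t^{-n}y_2)$. *)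

(* Defs.v *)
From mathcomp Require Import all_boot all_order all_algebra.
Set Implicit Arguments. Unset Strict Implicit. Unset Printing Implicit Defensive.
Import Order.TTheory GRing.Theory Num.Theory.
Local Open Scope ring_scope.

(* A nonarchimedean local field is modelled as a field F together with a
   normalized discrete valuation v : F -> int (only meaningful on nonzero
   elements; the value v 0 is irrelevant), such that F is complete for v and
   the residue field O/tO is finite. *)
Section LocalField.
Variable F : fieldType.
Variable v : F -> int.

Definition inO (x : F) : Prop := x = 0 \/ 0 <= v x.
Definition inP (x : F) : Prop := x = 0 \/ 0 < v x.
Definition small (N : int) (x : F) : Prop := x = 0 \/ N <= v x.

Record is_local_field : Prop := {
  lf_vM : forall x y, x != 0 -> y != 0 -> v (x * y) = v x + v y;
  lf_vD : forall x y, x != 0 -> y != 0 -> x + y != 0 ->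
            Num.min (v x) (v y) <= v (x + y);
  lf_surj : forall n : int, exists x, x != 0 /\ v x = n;
  lf_complete : forall a : nat -> F,
      (forall N : int, exists M : nat, forall m n, (M <= m)%N -> (M <= n)%N ->
          small N (a m - a n)) ->
      exists l : F, forall N : int, exists M : nat, forall n, (M <= n)%N ->
          small N (a n - l);
  lf_residue_finite : exists s : seq F, (forall r, r \in s -> inO r) /\
      forall x, inO x -> exists2 r, r \in s & inP (x - r)
}.

(* residue characteristic different from 2: 2 is a unit of O_E *)
Definition residue_char_not2 : Prop := (2 : F) != 0 /\ v 2 = 0.

(* M(b0): pairs of column vectors x = (x1,x2), y = (y1,y2) with det = b0 *)
Definition Mset (b0 : F) (x y : F * F) : Prop :=
  x.1 * y.2 - x.2 * y.1 = b0.

Definition MsetO (b0 : F) (x y : F * F) : Prop :=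
  Mset b0 x y /\ inO x.1 /\ inO x.2 /\ inO y.1 /\ inO y.2.

Definition Xset (b0 : F) (x y : F * F) : Prop :=
  Mset b0 x y /\ inO (x.1 * x.2) /\ inO (y.1 * y.2) /\
  inO (x.1 * y.2 + x.2 * y.1).

(* action of (t^n, t^-n) on a column vector *)
Definition tact (t : F) (n : int) (x : F * F) : F * F :=
  (t ^ n * x.1, t ^ (- n) * x.2).

End LocalField.

(* Main.v *)
Require Import Defs.
From mathcomp Require Import all_boot all_order all_algebra.
From mathcomp Require Import zify ring.
Import Order.TTheory GRing.Theory Num.Theory.
Local Open Scope ring_scope.

Lemma v1 {F : fieldType} {v : F -> int} (hF : is_local_field v) : v 1 = 0.
Proof.
have := lf_vM hF (oner_neq0 F) (oner_neq0 F); rewrite mulr1 => h.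
have e : forall z : int, z = z + z -> z = 0 by move=> z; lia.
exact: e h.
Qed.

Lemma vN1 {F : fieldType} {v : F -> int} (hF : is_local_field v) : v (-1) = 0.
Proof.
have n1 : (-1 : F) != 0 by rewrite oppr_eq0 oner_neq0.
have := lf_vM hF n1 n1; rewrite mulrNN mulr1 (v1 hF) => h.
have e : forall z : int, 0 = z + z -> z = 0 by move=> z; lia.
exact: e h.
Qed.

Lemma vN {F : fieldType} {v : F -> int} (hF : is_local_field v) x :
  x != 0 -> v (- x) = v x.
Proof.
move=> hx; have n1 : (-1 : F) != 0 by rewrite oppr_eq0 oner_neq0.
by rewrite -mulN1r (lf_vM hF n1 hx) (vN1 hF) add0r.
Qed.

Lemma inOM {F : fieldType} {v : F -> int} (hF : is_local_field v) x y :
  inO v x -> inO v y -> inO v (x * y).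
Proof.
case: (eqVneq x 0) => [->|hx]; first by rewrite mul0r; left.
case: (eqVneq y 0) => [->|hy]; first by rewrite mulr0; left.
move=> [/eqP|hvx]; first by rewrite (negbTE hx).
move=> [/eqP|hvy]; first by rewrite (negbTE hy).
right; rewrite (lf_vM hF hx hy); lia.
Qed.

Lemma inOD {F : fieldType} {v : F -> int} (hF : is_local_field v) x y :
  inO v x -> inO v y -> inO v (x + y).
Proof.
case: (eqVneq x 0) => [->|hx]; first by rewrite add0r.
case: (eqVneq y 0) => [->|hy]; first by rewrite addr0.
case: (eqVneq (x + y) 0) => [->|hxy]; first by left.
move=> [/eqP|hvx]; first by rewrite (negbTE hx).
move=> [/eqP|hvy]; first by rewrite (negbTE hy).
right; have := lf_vD hF hx hy hxy.
rewrite ge_min => /orP [] h; [exact: le_trans hvx h | exact: le_trans hvy h].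
Qed.

Lemma inON {F : fieldType} {v : F -> int} (hF : is_local_field v) x :
  inO v x -> inO v (- x).
Proof.
case: (eqVneq x 0) => [->|hx]; first by rewrite oppr0; left.
by move=> [->|h]; [left; rewrite oppr0 | right; rewrite (vN hF _ hx)].
Qed.

Lemma inO_root {F : fieldType} {v : F -> int} (hF : is_local_field v) a c :
  inO v (a * c) -> inO v (a + c) -> inO v a.
Proof.
case: (eqVneq a 0) => [->|ha]; first by left.
case: (eqVneq c 0) => [->|hc]; first by rewrite addr0.
move=> [/eqP|hac]; first by rewrite mulf_eq0 (negbTE ha) (negbTE hc).
rewrite (lf_vM hF ha hc) in hac.
case: (lerP 0 (v a)) => hva; first by right.
have hvc : v a < v c by lia.
case: (eqVneq (a + c) 0) => [e|hs].
  have ec : c = - a by apply/eqP; rewrite -addr_eq0 addrC e.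
  rewrite ec (vN hF _ ha) in hvc; lia.
move=> [/eqP|hs0]; first by rewrite (negbTE hs).
have hcN : - c != 0 by rewrite oppr_eq0.
have hsum : (a + c) + - c != 0 by rewrite addrK.
have := lf_vD hF hs hcN hsum; rewrite addrK (vN hF _ hc).
rewrite ge_min => /orP [] h; lia.
Qed.

Lemma vtn {F : fieldType} {v : F -> int} (hF : is_local_field v) t :
  t != 0 -> v t = 1 -> forall k : nat, v (t ^+ k) = k%:Z.
Proof.
move=> ht0 ht; elim=> [|k IH]; first by rewrite expr0 (v1 hF).
rewrite exprS (lf_vM hF ht0 (expf_neq0 k ht0)) IH ht; lia.
Qed.

Lemma vt {F : fieldType} {v : F -> int} (hF : is_local_field v) t :
  t != 0 -> v t = 1 -> forall z : int, v (t ^ z) = z.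
Proof.
move=> ht0 ht z.
have h1 : t ^ z * t ^ (- z) = 1 by rewrite -expfzDr // subrr.
have := lf_vM hF (expfz_neq0 z ht0) (expfz_neq0 (- z) ht0).
rewrite h1 (v1 hF).
case: z {h1} => k.
  by rewrite -exprnP (vtn hF _ ht0 ht).
rewrite NegzE opprK -exprnP (vtn hF _ ht0 ht) => h.
have e : forall a b : int, 0 = a + b -> a = - b by move=> a b; lia.
exact: e h.
Qed.

Lemma pairv {F : fieldType} {v : F -> int} (hF : is_local_field v) (a c : F) :
  inO v (a * c) -> a = 0 \/ c = 0 \/ 0 <= v a + v c.
Proof.
case: (eqVneq a 0) => [->|ha]; first by left.
case: (eqVneq c 0) => [->|hc]; first by right; left.
move=> [/eqP|h]; first by rewrite mulf_eq0 (negbTE ha) (negbTE hc).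
by right; right; rewrite -(lf_vM hF ha hc).
Qed.

Lemma choose_n {F : fieldType} (v : F -> int) (x1 x2 y1 y2 : F) :
 (x1 = 0 \/ x2 = 0 \/ 0 <= v x1 + v x2) ->
 (y1 = 0 \/ y2 = 0 \/ 0 <= v y1 + v y2) ->
 (x1 = 0 \/ y2 = 0 \/ 0 <= v x1 + v y2) ->
 (y1 = 0 \/ x2 = 0 \/ 0 <= v y1 + v x2) -> (x1 != 0 \/ y1 != 0) ->
 exists n : int, (x1 = 0 \/ n <= v x1) /\ (y1 = 0 \/ n <= v y1) /\
   (x2 = 0 \/ - n <= v x2) /\ (y2 = 0 \/ - n <= v y2).
Proof.
move=> p1 p2 p3 p4 nz.
case: (eqVneq x1 0) => [e1|h1].
  have h2 : y1 != 0 by case: nz => //; rewrite e1 eqxx.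
  exists (v y1); split; first by left.
  split; first by right.
  split.
    case: p4 => [/eqP|[->|p]]; [by rewrite (negbTE h2) | by left | right; lia].
  case: p2 => [/eqP|[->|p]]; [by rewrite (negbTE h2) | by left | right; lia].
case: (eqVneq y1 0) => [e2|h2].
  exists (v x1); split; first by right.
  split; first by left.
  split.
    case: p1 => [/eqP|[->|p]]; [by rewrite (negbTE h1) | by left | right; lia].
  case: p3 => [/eqP|[->|p]]; [by rewrite (negbTE h1) | by left | right; lia].
case: (leP (v x1) (v y1)) => hle.
  exists (v x1); split; first by right.
  split; first by right.
  split.
    case: p1 => [/eqP|[->|p]]; [by rewrite (negbTE h1) | by left | right; lia].
  case: p3 => [/eqP|[->|p]]; [by rewrite (negbTE h1) | by left | right; lia].
exists (v y1); split; first by right; lia.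
split; first by right.
split.
  case: p4 => [/eqP|[->|p]]; [by rewrite (negbTE h2) | by left | right; lia].
case: p2 => [/eqP|[->|p]]; [by rewrite (negbTE h2) | by left | right; lia].
Qed.

Lemma inO_shift {F : fieldType} {v : F -> int} (hF : is_local_field v)
  (t : F) (ht0 : t != 0) (ht : v t = 1) (m : int) (a : F) :
  (a = 0 \/ - m <= v a) -> inO v (t ^ m * a).
Proof.
case: (eqVneq a 0) => [->|ha]; first by rewrite mulr0; left.
move=> [/eqP|h]; first by rewrite (negbTE ha).
right; rewrite (lf_vM hF (expfz_neq0 m ht0) ha) (vt hF _ ht0 ht).
have e : forall p q : int, - p <= q -> 0 <= p + q by move=> p q; lia.
exact: e h.
Qed.

Lemma tcancel {F : fieldType} (t : F) (ht0 : t != 0) (n : int) :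
  t ^ n * t ^ (- n) = 1 /\ t ^ (- n) * t ^ n = 1.
Proof.
by split; rewrite -expfzDr // ?subrr ?addNr.
Qed.

Theorem lemma4p12 (F : fieldType) (v : F -> int)
  (hF : is_local_field v) (h2 : residue_char_not2 v)
  (t : F) (ht0 : t != 0) (ht : v t = 1)
  (b0 : F) (hb0 : b0 != 0) :
  (forall x y : F * F,
     Xset v b0 x y <->
     exists n : int, exists x' y' : F * F,
       MsetO v b0 x' y' /\ x = tact t n x' /\ y = tact t n y')
  /\ (~ inO v b0 -> forall x y : F * F, ~ Xset v b0 x y).
Proof.
have main : forall x y : F * F,
     Xset v b0 x y <->
     exists n : int, exists x' y' : F * F,
       MsetO v b0 x' y' /\ x = tact t n x' /\ y = tact t n y'.
  move=> [x1 x2] [y1 y2]; split.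
    rewrite /Xset /Mset /=; move=> [hM [hxx [hyy hs]]].
    have hp : inO v ((x1 * y2) * (x2 * y1)).
      have -> : (x1 * y2) * (x2 * y1) = (x1 * x2) * (y1 * y2) by ring.
      exact: inOM hF _ _ hxx hyy.
    have ha : inO v (x1 * y2) := inO_root hF _ _ hp hs.
    have hc : inO v (x2 * y1).
      apply: (inO_root hF _ (x1 * y2)); first by rewrite mulrC.
      by rewrite addrC.
    have hc' : inO v (y1 * x2) by rewrite mulrC.
    have nz : x1 != 0 \/ y1 != 0.
      case: (eqVneq x1 0) => [e1|]; last by left.
      case: (eqVneq y1 0) => [e2|]; last by right.
      by move: hb0; rewrite -hM e1 e2 !mul0r mulr0 subrr eqxx.
    have [n [c1 [c2 [c3 c4]]]] := choose_n v _ _ _ _ (pairv hF _ _ hxx) (pairv hF _ _ hyy)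
      (pairv hF _ _ ha) (pairv hF _ _ hc') nz.
    have [e e'] := tcancel _ ht0 n.
    exists n, (t ^ (- n) * x1, t ^ n * x2), (t ^ (- n) * y1, t ^ n * y2).
    rewrite /MsetO /Mset /tact /=.
    split.
      split.
        rewrite (mulrACA (t ^ (- n))) e' mul1r.
        by rewrite (mulrACA (t ^ n)) e mul1r.
      split; first by apply: inO_shift hF _ ht0 ht _ _ _; rewrite opprK.
      split; first by apply: inO_shift hF _ ht0 ht _ _ _.
      split; first by apply: inO_shift hF _ ht0 ht _ _ _; rewrite opprK.
      by apply: inO_shift hF _ ht0 ht _ _ _.
    by rewrite !mulrA e e' !mul1r.
  move=> [n [[a1 a2] [[b1 b2] [[hM [h1 [h2' [h3 h4]]]] [-> ->]]]]].
  have [e e'] := tcancel _ ht0 n.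
  rewrite /Xset /Mset /tact /=; rewrite /Mset /= in hM.
  rewrite (mulrACA (t ^ n)) e mul1r (mulrACA (t ^ (- n))) e' mul1r.
  rewrite (mulrACA (t ^ n) a1) e mul1r (mulrACA (t ^ n) b1) e mul1r.
  split; first by [].
  split; first exact: inOM hF _ _ h1 h2'.
  split; first exact: inOM hF _ _ h3 h4.
  by apply: inOD hF _ _ (inOM hF _ _ h1 h4) (inOM hF _ _ h2' h3).
split; first exact: main.
move=> hb x y /main [n [[a1 a2] [[b1 b2] [[hM [h1 [h2' [h3 h4]]]] _]]]].
apply: hb; rewrite -hM /=.
exact: inOD hF _ _ (inOM hF _ _ h1 h4) (inON hF _ (inOM hF _ _ h2' h3)).
Qed.
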